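(* Let $S$ be a vector space over a field $\Bbbk$ and let $\nu:S\setminus\{0\}\to C$ and $\nu':S\setminus\{0\}\to C'$ be well-ordered injective valuations. Put $C_\nu=\nu(S\setminus\{0\})$, $C_{\nu'}=\nu'(S\setminus\{0\})$ and define $$\mathbf K_{\nu',\nu}(a)=\min\{\nu'(x): x\in S\setminus\{0\},\ \nu(x)=a\}\quad (a\in C_\nu),$$ and symmetrically $\mathbf K_{\nu,\nu'}:C_{\nu'}\to C_\nu$. Then $\mathbf K_{\nu',\nu}:C_\nu\to C_{\nu'}$ and $\mathbf K_{\nu,\nu'}:C_{\nu'}\to C_\nu$ are well-defined and mutually inverse bijections. Moreover, there exists a basis $\mathbf B$ of $S$ adapted to both $\nu$ and $\nu'$ such that $\mathbf K_{\nu',\nu}(\nu(b))=\nu'(b)$ for all $b\in\mathbf B$.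
   Context: A valuation on a $\Bbbk$-vector space $S$ with values in a totally ordered set $(C,\le)$ is a map $\nu:S\setminus\{0\}\to C$ such that $\nu(cx)=\nu(x)$ for all $c\in\Bbbk^\times$, $x\ne0$, and $\nu(x+y)\le\max(\nu(x),\nu(y))$ whenever $x,y,x+y\neq 0$. It is well-ordered if its image $\nu(S\setminus\{0\})$ is a well-ordered subset of $C$. It is injective if there is a basis $\mathbf B$ of $S$ such that $\nu|_{\mathbf B}$ is injective; such a basis is called adapted to $\nu$ (then $\nu|_{\mathbf B}$ is a bijection onto $\nu(S\setminus\{0\})$ and $\nu(x)$ is the maximum of $\nu(b)$ over the $b$ occurring in the expansion of $x$). *)

(* Defs.v *)
From HB Require Import structures.
From mathcomp Require Import all_boot all_order all_algebra.
Set Implicit Arguments. Unset Strict Implicit. Unset Printing Implicit Defensive.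
Import Order.TTheory GRing.Theory.
Local Open Scope ring_scope.

(* Valuations on a k-vector space S with values in a totally ordered type C.
   The map nu is total on S; its value at 0 is irrelevant (never used). *)

Section Valuations.
Variables (k : fieldType) (S : lmodType k).

Definition is_valuation (d : Order.disp_t) (C : orderType d) (nu : S -> C) : Prop :=
  (forall (c : k) (x : S), c != 0 -> x != 0 -> nu (c *: x) = nu x) /\
  (forall x y : S, x != 0 -> y != 0 -> x + y != 0 ->
     (nu (x + y) <= Order.max (nu x) (nu y))%O).

Definition val_image (d : Order.disp_t) (C : orderType d) (nu : S -> C) (a : C) : Prop :=
  exists2 x : S, x != 0 & nu x = a.

Definition well_ordered_set (d : Order.disp_t) (C : orderType d) (A : C -> Prop) : Prop :=
  forall P : C -> Prop, (forall a, P a -> A a) -> (exists a, P a) ->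
    exists2 m, P m & forall a, P a -> (m <= a)%O.

Definition well_ordered_valuation (d : Order.disp_t) (C : orderType d) (nu : S -> C) :=
  is_valuation nu /\ well_ordered_set (val_image nu).

(* Bases of S (possibly infinite-dimensional), as subsets B of S. *)
Definition lin_indep (B : S -> Prop) : Prop :=
  forall (n : nat) (b : 'I_n -> S) (c : 'I_n -> k),
    injective b -> (forall i, B (b i)) ->
    \sum_(i < n) c i *: b i = 0 -> forall i, c i = 0.

Definition spans (B : S -> Prop) : Prop :=
  forall x : S, exists n (b : 'I_n -> S) (c : 'I_n -> k),
    (forall i, B (b i)) /\ x = \sum_(i < n) c i *: b i.

Definition is_basis (B : S -> Prop) : Prop := lin_indep B /\ spans B.

Definition adapted_basis (d : Order.disp_t) (C : orderType d) (nu : S -> C)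
    (B : S -> Prop) : Prop :=
  is_basis B /\ (forall b1 b2, B b1 -> B b2 -> nu b1 = nu b2 -> b1 = b2).

Definition injective_valuation (d : Order.disp_t) (C : orderType d) (nu : S -> C) :=
  is_valuation nu /\ exists B, adapted_basis nu B.

(* K_{nu',nu}(a) = c  means: c = min { nu'(x) : x <> 0, nu(x) = a }. *)
Definition K_is (d : Order.disp_t) (C : orderType d) (d' : Order.disp_t)
    (C' : orderType d') (nu' : S -> C') (nu : S -> C) (a : C) (c : C') : Prop :=
  (exists2 x : S, x != 0 & nu x = a /\ nu' x = c) /\
  (forall x : S, x != 0 -> nu x = a -> (c <= nu' x)%O).

End Valuations.

(* Main.v *)
Require Import Defs.
From mathcomp Require Import all_boot all_order all_algebra.
From Stdlib Require Import ClassicalEpsilon Classical.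
Set Implicit Arguments. Unset Strict Implicit. Unset Printing Implicit Defensive.
Import Order.TTheory GRing.Theory.
Local Open Scope ring_scope.

Section Basic.
Variables (k : fieldType) (S : lmodType k) (d : Order.disp_t) (C : orderType d) (nu : S -> C).
Hypothesis Hv : is_valuation nu.

Definition small (t : C) (z : S) := z = 0 \/ (nu z < t)%O.

Lemma nuZ c x : c != 0 -> x != 0 -> nu (c *: x) = nu x.
Proof. by case: Hv => H _; apply: H. Qed.

Lemma nuN x : x != 0 -> nu (- x) = nu x.
Proof. by move=> hx; rewrite -scaleN1r nuZ // oppr_eq0 oner_eq0. Qed.

Lemma nuD x y : x != 0 -> y != 0 -> x + y != 0 -> (nu (x + y) <= Order.max (nu x) (nu y))%O.
Proof. by case: Hv => _ H; apply: H. Qed.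

Lemma small0 t : small t 0. Proof. by left. Qed.

Lemma smallD t x y : small t x -> small t y -> small t (x + y).
Proof.
case=> [->|hx]; first by rewrite add0r.
case=> [->|hy]; first by rewrite addr0; right.
have [->|nz] := eqVneq (x + y) 0; first by left.
right.
have [x0|x0] := eqVneq x 0; first by rewrite x0 add0r.
have [y0|y0] := eqVneq y 0; first by rewrite y0 addr0.
apply: (le_lt_trans (nuD x0 y0 nz)).
by rewrite /Order.max; case: ifP.
Qed.


Lemma smallZ t c x : small t x -> small t (c *: x).
Proof.
case=> [->|hx]; first by rewrite scaler0; left.
have [->|c0] := eqVneq c 0; first by rewrite scale0r; left.
have [x0|x0] := eqVneq x 0; first by rewrite x0 scaler0; left.
by right; rewrite nuZ.
Qed.

Lemma smallN t x : small t x -> small t (- x).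
Proof. by move=> h; rewrite -scaleN1r; apply: smallZ. Qed.

Lemma smallB t x y : small t x -> small t y -> small t (x - y).
Proof. by move=> hx hy; apply: smallD => //; apply: smallN. Qed.

Lemma small_sum t (I : Type) (r : seq I) (P : pred I) (F : I -> S) :
  (forall i, P i -> small t (F i)) -> small t (\sum_(i <- r | P i) F i).
Proof. by move=> h; apply: (big_ind (small t)) => //; [apply: small0| apply: smallD]. Qed.

Lemma strict x w : x != 0 -> small (nu x) w -> x + w != 0 /\ nu (x + w) = nu x.
Proof.
move=> x0 [->|hw]; first by rewrite addr0.
have [w0|w0] := eqVneq w 0; first by rewrite w0 addr0.
have nz : x + w != 0.
  apply/eqP=> e; have ew : w = - x by apply/eqP; rewrite -subr_eq0 opprK addrC e.
  by move: hw; rewrite ew nuN // ltxx.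
split=> //; apply: le_anti; apply/andP; split.
  by apply: le_trans (nuD x0 w0 nz) _; rewrite ge_max lexx (ltW hw).
have nw : - w != 0 by rewrite oppr_eq0.
have := nuD nz nw; rewrite addrK => /(_ x0); rewrite nuN // le_max.
by case/orP=> // h; move: hw; rewrite ltNge h.
Qed.
End Basic.

Lemma fin_max (d : Order.disp_t) (C : orderType d) (I : eqType) (f : I -> C) (P : pred I) (s : seq I) :
  has P s -> exists i, [/\ i \in s, P i & forall j, j \in s -> P j -> (f j <= f i)%O].
Proof.
elim: s => [|a s IH] //= /orP [Pa|hs].
  case: (boolP (has P s)) => [/IH [i [ins Pi hi]]|hn].
    case: (leP (f a) (f i)) => hai.
      exists i; split=> //; first by rewrite inE ins orbT.
      by move=> j; rewrite inE => /orP [/eqP ->|/hi] //.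
    exists a; split=> //; first by rewrite inE eqxx.
    move=> j; rewrite inE => /orP [/eqP ->|js Pj]; first by [].
    by apply: le_trans (hi j js Pj) (ltW hai).
  exists a; split=> //; first by rewrite inE eqxx.
  move=> j; rewrite inE => /orP [/eqP ->|js Pj] //.
  by move/hasPn: hn => /(_ j js); rewrite Pj.
have [i [ins Pi hi]] := IH hs.
case: (boolP (P a)) => Pa.
  case: (leP (f a) (f i)) => hai.
    exists i; split=> //; first by rewrite inE ins orbT.
    by move=> j; rewrite inE => /orP [/eqP ->|/hi] //.
  exists a; split=> //; first by rewrite inE eqxx.
  move=> j; rewrite inE => /orP [/eqP ->|js Pj]; first by [].
  by apply: le_trans (hi j js Pj) (ltW hai).
exists i; split=> //; first by rewrite inE ins orbT.
by move=> j; rewrite inE => /orP [/eqP ->|/hi] //; rewrite (negbTE Pa).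
Qed.

Section Top.
Variables (k : fieldType) (S : lmodType k) (d : Order.disp_t) (C : orderType d) (nu : S -> C).
Hypothesis Hv : is_valuation nu.
Variable B : S -> Prop.
Hypothesis HB : forall b1 b2, B b1 -> B b2 -> nu b1 = nu b2 -> b1 = b2.

Lemma maxsplit (I : eqType) (s : seq I) (c : I -> k) (b : I -> S) :
  (forall i, B (b i)) -> has (fun i => c i *: b i != 0) s ->
  exists i, [/\ i \in s, c i *: b i != 0 &
     small nu (nu (b i)) (\sum_(j <- s | b j != b i) c j *: b j)].
Proof.
move=> hB /(fin_max (nu \o b)) [i [ins Pi hi]]; exists i; split=> //.
rewrite big_seq_cond; apply: small_sum => // j /andP [js bji].
have [->|nz] := eqVneq (c j *: b j) 0; first by left.
right; move: nz; rewrite scaler_eq0 negb_or => /andP [c0 b0].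
rewrite nuZ // lt_neqAle (hi j js) ?andbT; last by rewrite scaler_eq0 negb_or c0.
by apply/eqP => e; move/eqP: bji; apply; apply: HB.
Qed.

Lemma top_aux n (I : eqType) (s : seq I) (c : I -> k) (b : I -> S) :
  (size s <= n)%N -> (forall i, B (b i)) ->
  let x := \sum_(j <- s) c j *: b j in
  x = 0 \/ exists2 b0, B b0 & exists l, [/\ l != 0, nu b0 = nu x & small nu (nu x) (x - l *: b0)].
Proof.
elim: n s => [|n IH] s hs hB x.
  by left; move: hs; rewrite leqn0 => /nilP hs; rewrite /x hs big_nil.
case: (boolP (has (fun i => c i *: b i != 0) s)) => hh; last first.
  left; rewrite /x big1_seq // => i /andP [_ ins].
  by move/hasPn: hh => /(_ i ins) /negbNE /eqP.
have [i [ins nzi sm]] := maxsplit hB hh.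
have ex : x = (\sum_(j <- s | b j == b i) c j) *: b i + \sum_(j <- s | b j != b i) c j *: b j.
  rewrite /x (bigID (fun j => b j == b i)) /= scaler_suml; congr (_ + _).
  by apply: eq_bigr => j /eqP ->.
set l := \sum_(j <- s | b j == b i) c j in ex.
set r := \sum_(j <- s | b j != b i) c j *: b j in ex sm.
have bi0 : b i != 0 by move: nzi; rewrite scaler_eq0 negb_or => /andP [].
have [l0|l0] := eqVneq l 0; last first.
  have nzl : l *: b i != 0 by rewrite scaler_eq0 negb_or l0.
  have sm' : small nu (nu (l *: b i)) r by rewrite nuZ.
  have [h1 h2] := strict Hv nzl sm'.
  right; exists (b i) => //; exists l; rewrite ex h2 nuZ //; split=> //.
  by rewrite [l *: _ + _]addrC addrK.
have -> : x = \sum_(j <- [seq j <- s | b j != b i]) c j *: b j.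
  by rewrite big_filter ex l0 scale0r add0r.
apply: IH => //.
rewrite size_filter -ltnS; apply: leq_trans hs.
rewrite -(count_predC (fun j => b j != b i) s) -addn1 leq_add2l.
by rewrite -has_count; apply/hasP; exists i => //=; rewrite negbK.
Qed.

Hypothesis HS : forall x : S, exists n (b : 'I_n -> S) (c : 'I_n -> k),
    (forall i, B (b i)) /\ x = \sum_(i < n) c i *: b i.

Lemma top x : x != 0 ->
  exists2 b0, B b0 & exists l, [/\ l != 0, nu b0 = nu x & small nu (nu x) (x - l *: b0)].
Proof.
move=> x0; have [n [b [c [hB ex]]]] := HS x; rewrite ex in x0 *.
have [h|h] := top_aux c (leqnn (size (index_enum 'I_n))) hB; last exact: h.
by move: x0; rewrite /= in h; rewrite h eqxx.
Qed.

Lemma one x y : x != 0 -> y != 0 -> nu x = nu y ->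
  exists m, small nu (nu x) (x - m *: y).
Proof.
move=> x0 y0 exy.
have [b1 B1 [l1 [l10 e1 s1]]] := top x0.
have [b2 B2 [l2 [l20 e2 s2]]] := top y0.
have eb : b2 = b1 by apply: HB => //; rewrite e1 e2.
exists (l1 / l2).
have -> : x - l1 / l2 *: y = (x - l1 *: b1) - (l1 / l2) *: (y - l2 *: b1).
  rewrite scalerBr scalerA mulrVK ?unitfE //.
  by rewrite opprB addrA addrNK.
apply: smallB => //; apply: smallZ => //; by rewrite exy -eb.
Qed.

Lemma indep n (b : 'I_n -> S) (c : 'I_n -> k) :
  injective b -> (forall i, B (b i)) -> (forall i, b i != 0) ->
  \sum_(i < n) c i *: b i = 0 -> forall i, c i = 0.
Proof.
move=> binj hB b0 hs i; apply/eqP; apply/negPn/negP => ci.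
have hh : has (fun i => c i *: b i != 0) (index_enum 'I_n).
  by apply/hasP; exists i; rewrite ?mem_index_enum // scaler_eq0 negb_or ci b0.
have [j [_ nzj sm]] := maxsplit hB hh.
move: hs; rewrite (bigD1_seq j) ?mem_index_enum ?index_enum_uniq //=.
have -> : \sum_(i0 <- index_enum 'I_n | i0 != j) c i0 *: b i0 =
          \sum_(i0 <- index_enum 'I_n | b i0 != b j) c i0 *: b i0.
  by apply: eq_bigl => l; rewrite inj_eq.
have sm' : small nu (nu (c j *: b j)) (\sum_(i0 <- index_enum 'I_n | b i0 != b j) c i0 *: b i0).
  by rewrite nuZ //; move: nzj; rewrite scaler_eq0 negb_or => /andP [].
by have [/eqP h _] := strict Hv nzj sm'.
Qed.

End Top.

Section Main.
Variables (k : fieldType) (S : lmodType k) (d : Order.disp_t) (C : orderType d)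
  (d' : Order.disp_t) (C' : orderType d') (nu : S -> C) (nu' : S -> C').

Lemma K_exists : well_ordered_set (val_image nu') ->
  forall a, val_image nu a -> exists c, K_is nu' nu a c.
Proof.
move=> wo a [x x0 ea].
have [m [y y0 [e1 e2]] hm] := wo (fun c => exists2 y : S, y != 0 & nu y = a /\ nu' y = c)
  (fun c '(ex_intro2 y y0 (conj _ e)) => ex_intro2 _ _ y y0 e) (ex_intro _ (nu' x) (ex_intro2 _ _ x x0 (conj ea erefl))).
exists m; split; first by exists y.
by move=> z z0 ez; apply: hm; exists z.
Qed.

Lemma K_unique a c1 c2 : K_is nu' nu a c1 -> K_is nu' nu a c2 -> c1 = c2.
Proof.
move=> [[x1 x10 [e1 f1]] h1] [[x2 x20 [e2 f2]] h2].
apply: le_anti; apply/andP; split; first by rewrite -f2; apply: h1.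
by rewrite -f1; apply: h2.
Qed.

Lemma K_inv : is_valuation nu -> injective_valuation nu' ->
  forall a c, K_is nu' nu a c -> K_is nu nu' c a.
Proof.
move=> Hv [Hv' [B' [[_ HS'] HB']]] a c [[x x0 [ea ec]] hmin].
split; first by exists x.
move=> y y0 ey; rewrite leNgt; apply/negP => lt.
have [m sm] := one Hv' HB' HS' x0 y0 (etrans ec (esym ey)).
have sw : small nu (nu x) (- (m *: y)).
  apply: smallN => //; apply: smallZ => //; right; by rewrite ea.
have [nz ez] := strict Hv x0 sw.
have := hmin _ nz (etrans ez ea).
rewrite ec in sm; case: sm => [e|lt'].
  by move: nz; rewrite e eqxx.
by rewrite leNgt lt'.
Qed.

End Main.

Theorem mainTheorem1 (k : fieldType) (S : lmodType k)
    (d : Order.disp_t) (C : orderType d) (d' : Order.disp_t) (C' : orderType d')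
    (nu : S -> C) (nu' : S -> C') :
  well_ordered_valuation nu -> injective_valuation nu ->
  well_ordered_valuation nu' -> injective_valuation nu' ->
  (* K_{nu',nu} : C_nu -> C_nu' is well defined *)
  (forall a, val_image nu a -> exists c, K_is nu' nu a c) /\
  (* K_{nu,nu'} : C_nu' -> C_nu is well defined *)
  (forall c, val_image nu' c -> exists a, K_is nu nu' c a) /\
  (* they are mutually inverse *)
  (forall a c, val_image nu a -> K_is nu' nu a c -> K_is nu nu' c a) /\
  (forall c a, val_image nu' c -> K_is nu nu' c a -> K_is nu' nu a c) /\
  (* a common adapted basis *)
  (exists B : S -> Prop, adapted_basis nu B /\ adapted_basis nu' B /\
     forall b, B b -> K_is nu' nu (nu b) (nu' b)).
Proof.
move=> [Hv wo] Hi [Hv' wo'] Hi'.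
have KE := @K_exists _ _ _ C _ _ nu nu' wo'.
have KI := K_inv Hv Hi'.
have KI' := K_inv Hv' Hi.
split; first exact: KE.
split; first exact: (K_exists wo).
split; first by move=> a c _; apply: KI.
split; first by move=> c a _; apply: KI'.
pose Pg a x := x != 0 /\ nu x = a /\ K_is nu' nu a (nu' x).
pose g a := epsilon (inhabits (0 : S)) (Pg a).
have gs : forall a, val_image nu a -> Pg a (g a).
  move=> a va; apply: epsilon_spec.
  have [c [[x x0 [ea ec]] hc]] := KE a va.
  by exists x; split=> //; split=> //; rewrite ec; split=> //; exists x.
pose B b := exists2 a, val_image nu a & b = g a.
have Bnz : forall b, B b -> b != 0 by move=> b [a va ->]; case: (gs a va).
have BK : forall b, B b -> K_is nu' nu (nu b) (nu' b).
  by move=> b [a va ->]; have [_ [-> h]] := gs a va.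
have HB : forall b1 b2, B b1 -> B b2 -> nu b1 = nu b2 -> b1 = b2.
  move=> b1 b2 [a1 v1 ->] [a2 v2 ->].
  by have [_ [-> _]] := gs a1 v1; have [_ [-> _]] := gs a2 v2; move=> ->.
have HB' : forall b1 b2, B b1 -> B b2 -> nu' b1 = nu' b2 -> b1 = b2.
  move=> b1 b2 B1 B2 e; apply: HB => //.
  have k1 := KI _ _ (BK _ B1); have k2 := KI _ _ (BK _ B2).
  by rewrite e in k1; apply: K_unique k1 k2.
have ind : lin_indep B.
  by move=> n b c binj hB; apply: (indep Hv HB) => // i; apply: Bnz.
have spn : spans B.
  case: Hi => _ [B0 [[_ HS0] HB0]].
  pose sp x := exists s : seq (k * S), (forall p, p \in s -> B p.2) /\ x = \sum_(p <- s) p.1 *: p.2.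
  suff hsp : forall x, sp x.
    move=> x; have [s [hs ex]] := hsp x.
    exists (size s), (fun i => (nth (0, 0) s i).2), (fun i => (nth (0, 0) s i).1); split.
      by move=> i; apply: hs; apply: mem_nth.
    by rewrite ex (big_nth (0, 0)) big_mkord.
  move=> x; apply: NNPP => nsp.
  have x0 : x != 0.
    by apply/eqP => e; apply: nsp; exists [::]; rewrite e big_nil.
  have [m [y [nsy y0 eym]] hm] := wo (fun a => exists x, [/\ ~ sp x, x != 0 & nu x = a])
    (fun a '(ex_intro x (And3 _ x0 e)) => ex_intro2 _ _ x x0 e)
    (ex_intro _ (nu x) (ex_intro _ x (And3 nsp x0 erefl))).
  have vm : val_image nu m by exists y.
  have [b0n [eb0 _]] := gs m vm.
  have Bb0 : B (g m) by exists m.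
  have [mu sm] := one Hv HB0 HS0 y0 b0n (etrans eym (esym eb0)).
  apply: nsy.
  have spr : sp (y - mu *: g m).
    case: sm => [->|lt]; first by exists [::]; rewrite big_nil.
    apply: NNPP => ns.
    have [y1|y1nz] := eqVneq (y - mu *: g m) 0.
      by apply: ns; rewrite y1; exists [::]; rewrite big_nil.
    have := hm (nu (y - mu *: g m)) (ex_intro _ _ (And3 ns y1nz erefl)).
    move=> h; have h2 : (nu y <= m)%O by rewrite eym.
    by have := lt_le_trans (le_lt_trans h lt) h2; rewrite ltxx.
  have [s [hs es]] := spr.
  exists ((mu, g m) :: s); split.
    by move=> p; rewrite inE => /orP [/eqP ->|/hs].
  by rewrite big_cons /= -es addrC subrK.
exists B; split; first by split.
by split; first by split.
Qed.
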